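(* Let $n_0,n_1,n_\infty$ be integers with $1\le n_0\le n_1\le n_\infty$ and $n=n_0+n_1+n_\infty$, and let $\overline{\mathcal{S}}=\{[\xi:\eta:\zeta]\in\mathbb{CP}^2 : \zeta^{n-n_0-n_1}\eta^n-\xi^{n-n_0}(\zeta-\xi)^{n-n_1}=0\}$. Then the singular points of $\overline{\mathcal{S}}$ are $[0:0:1]$, $[1:0:1]$, and, if $n_\infty>1$, also $[0:1:0]$. *)

(* Defs.v *)
From HB Require Import structures.
From mathcomp Require Import all_boot all_order all_algebra.
From mathcomp Require Import complex reals.
From mathcomp Require Import mpoly.
Set Implicit Arguments. Unset Strict Implicit. Unset Printing Implicit Defensive.
Import Order.TTheory GRing.Theory Num.Theory.
Local Open Scope ring_scope.

Definition xi_ : 'I_3 := @Ordinal 3 0 isT.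
Definition eta_ : 'I_3 := @Ordinal 3 1 isT.
Definition zeta_ : 'I_3 := @Ordinal 3 2 isT.

Definition Spoly (K : ringType) (n0 n1 ninf : nat) : {mpoly K[3]} :=
  let n := (n0 + n1 + ninf)%N in
  'X_zeta_ ^+ (n - n0 - n1) * 'X_eta_ ^+ n
  - 'X_xi_ ^+ (n - n0) * ('X_zeta_ - 'X_xi_) ^+ (n - n1).

Definition singular_point (K : ringType) (F : {mpoly K[3]}) (v : 'I_3 -> K) : Prop :=
  (exists i, v i != 0) /\ F.@[v] = 0 /\ forall i : 'I_3, (mderiv i F).@[v] = 0.

Definition proj_eq (K : ringType) (v w : 'I_3 -> K) : Prop :=
  exists c : K, c != 0 /\ forall i, v i = c * w i.

Definition pt3 (K : ringType) (a b c : K) : 'I_3 -> K :=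
  fun i => if i == xi_ then a else if i == eta_ then b else c.

(* Main.v *)
Require Import Defs.
From HB Require Import structures.
From mathcomp Require Import all_boot all_order all_algebra.
From mathcomp Require Import complex reals.
From mathcomp Require Import mpoly ring zify.
Import Order.TTheory GRing.Theory Num.Theory.
Local Open Scope ring_scope.

Section S.
Variables (K : comNzRingType) (n : nat).
Lemma dX (i j : 'I_n) : mderiv i ('X_j : {mpoly K[n]}) = ((j == i)%:R)%:MP.
Proof.
rewrite mderivX mnm1E; case: eqP => [->|_].
  have -> : (U_(i) - U_(i))%MM = 0%MM by apply/mnmP => k; rewrite !mnmE subnn.
  by rewrite mpolyX0 scale1r mpolyC1.
by rewrite scale0r mpolyC0.
Qed.
Lemma dpow (i : 'I_n) (p : {mpoly K[n]}) k :
  mderiv i (p ^+ k.+1) = mderiv i p * p ^+ k *+ k.+1.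
Proof.
elim: k => [|k IH]; first by rewrite expr1 expr0 mulr1.
by rewrite exprS mderivM IH exprS; ring.
Qed.
End S.

Section G.
Variable (K : comNzRingType).
Definition G (a N b c : nat) : {mpoly K[3]} :=
  'X_zeta_ ^+ a.+1 * 'X_eta_ ^+ N.+1 - 'X_xi_ ^+ b.+1 * ('X_zeta_ - 'X_xi_) ^+ c.+1.

Lemma SpolyG p q a : Spoly K p.+1 q.+1 a.+1 =
  G a (p.+1 + q.+1 + a) (q.+1 + a) (p.+1 + a).
Proof.
rewrite /Spoly /G.
have -> : (p.+1 + q.+1 + a.+1 - p.+1 - q.+1 = a.+1)%N by lia.
have -> : (p.+1 + q.+1 + a.+1 - p.+1 = (q.+1 + a).+1)%N by lia.
have -> : (p.+1 + q.+1 + a.+1 - q.+1 = (p.+1 + a).+1)%N by lia.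
by rewrite !addnS.
Qed.

Variables (a N b c : nat) (v : 'I_3 -> K).
Local Notation x := (v xi_). Local Notation y := (v eta_). Local Notation z := (v zeta_).

Lemma evalG : (G a N b c).@[v] = z ^+ a.+1 * y ^+ N.+1 - x ^+ b.+1 * (z - x) ^+ c.+1.
Proof. by rewrite /G mevalB !mevalM !rmorphXn /= mevalB !mevalXU. Qed.

Lemma evalD i : (mderiv i (G a N b c)).@[v] =
  let dx := (xi_ == i)%:R in let dy := (eta_ == i)%:R in let dz := (zeta_ == i)%:R in
  (dz * z ^+ a *+ a.+1) * y ^+ N.+1 + z ^+ a.+1 * (dy * y ^+ N *+ N.+1)
  - ((dx * x ^+ b *+ b.+1) * (z - x) ^+ c.+1 + x ^+ b.+1 * ((dz - dx) * (z - x) ^+ c *+ c.+1)).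
Proof.
rewrite /G mderivB !mderivM !dpow mderivB !dX.
by rewrite !(mevalB, mevalD, mevalM, mevalMn, rmorphXn, mevalXU, mevalC) /= ?mevalB ?mevalXU.
Qed.

Lemma evalDx : (mderiv xi_ (G a N b c)).@[v] =
  - (x ^+ b * (z - x) ^+ c.+1 *+ b.+1 - x ^+ b.+1 * (z - x) ^+ c *+ c.+1).
Proof. rewrite evalD /=. ring. Qed.
Lemma evalDy : (mderiv eta_ (G a N b c)).@[v] = z ^+ a.+1 * y ^+ N *+ N.+1.
Proof. rewrite evalD /=. ring. Qed.
Lemma evalDz : (mderiv zeta_ (G a N b c)).@[v] =
  z ^+ a * y ^+ N.+1 *+ a.+1 - x ^+ b.+1 * (z - x) ^+ c *+ c.+1.
Proof. rewrite evalD /=. ring. Qed.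
End G.

Lemma ord3P (i : 'I_3) : i = xi_ \/ i = eta_ \/ i = zeta_.
Proof.
case: i => [[|[|[|k]]] Hi]; [left|right;left|right;right|]; try by apply/val_inj.
by [].
Qed.

Lemma z0pow (K : nzRingType) k : (0 : K) ^+ k.+1 = 0.
Proof. by rewrite exprS mul0r. Qed.

Lemma proj_eqE (K : nzRingType) (v : 'I_3 -> K) a b c :
  proj_eq v (pt3 a b c) <->
  exists k, k != 0 /\ v xi_ = k * a /\ v eta_ = k * b /\ v zeta_ = k * c.
Proof.
split.
  by move=> [k [kn H]]; exists k; rewrite !H.
move=> [k [kn [H1 [H2 H3]]]]; exists k; split => // i.
by case: (ord3P i) => [->|[->|->]].
Qed.

Lemma nzE (K : nzRingType) (v : 'I_3 -> K) :
  (exists j, v j != 0) <-> (v xi_ != 0 \/ v eta_ != 0 \/ v zeta_ != 0).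
Proof.
split.
  by move=> [j]; case: (ord3P j) => [->|[->|->]]; auto.
by move=> [H|[H|H]]; eexists; exact: H.
Qed.

Theorem corollary2 (R : realType) (n0 n1 ninf : nat)
    (h0 : (1 <= n0)%N) (h01 : (n0 <= n1)%N) (h1inf : (n1 <= ninf)%N)
    (v : 'I_3 -> R[i]) :
  singular_point (Spoly (R[i]) n0 n1 ninf) v <->
  [/\ exists j, v j != 0 &
   proj_eq v (pt3 0 0 1) \/ proj_eq v (pt3 1 0 1) \/
   ((1 < ninf)%N /\ proj_eq v (pt3 0 1 0))].
Proof.
case: n0 h0 h01 => [//|p] _.
case: n1 h1inf => [//|q]; case: ninf => [//|a] _ _.
rewrite SpolyG /singular_point !proj_eqE.
set N := (p.+1 + q.+1 + a)%N; set b := (q.+1 + a)%N; set c := (p.+1 + a)%N.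
split.
- move=> [nz [F0 D]]; split => //.
  move/nzE: nz => nz.
  have Dy := D eta_; have Dz := D zeta_.
  rewrite evalDy in Dy; rewrite evalDz in Dz; rewrite evalG in F0.
  have [y0|yn0] := eqVneq (v eta_) 0.
  + move: F0; rewrite y0 z0pow mulr0 sub0r => /eqP; rewrite oppr_eq0 mulf_eq0 !expf_eq0 /=.
    case/orP => /eqP H.
    * left; exists (v zeta_); rewrite H ?y0 !mulr0 mulr1; split => //.
      by case: nz => [|[]]; rewrite ?H ?y0 ?eqxx.
    * move/eqP: H; rewrite subr_eq0 => /eqP H.
      right; left; exists (v xi_); rewrite H ?y0 !mulr0 mulr1; split => //.
      by case: nz => [|[]]; rewrite ?H ?y0 ?eqxx.
  + move/eqP: Dy; rewrite mulrn_eq0 /= mulf_eq0 !expf_eq0 /= (negPf yn0) orbF.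
    move/eqP => z0.
    move: F0; rewrite z0 z0pow mul0r sub0r => /eqP; rewrite oppr_eq0 mulf_eq0 !expf_eq0 /= sub0r oppr_eq0 orbb.
    move/eqP => x0.
    right; right; split.
      rewrite ltnS lt0n; apply/negP => /eqP a0; move: Dz.
      rewrite ?z0 ?x0 a0 expr0 mul1r z0pow mul0r mul0rn subr0 => /eqP.
      by rewrite mulrn_eq0 /= expf_eq0 /= (negPf yn0).
    by exists (v eta_); rewrite x0 ?z0 !mulr0 mulr1.
- move=> [nz H]; split; first exact: nz.
  case: H => [[k [kn [ex [ey ez]]]]|[[k [kn [ex [ey ez]]]]|[a1 [k [kn [ex [ey ez]]]]]]].
  + rewrite evalG ex ey ez !mulr0 mulr1 subr0 !z0pow; split; first by ring.
    move=> i; case: (ord3P i) => [->|[->|->]];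
      rewrite ?evalDx ?evalDy ?evalDz ?ex ?ey ?ez ?mulr0 ?mulr1 ?subr0 ?z0pow; ring.
  + rewrite evalG ex ey ez !mulr0 mulr1 subrr !z0pow; split; first by ring.
    move=> i; case: (ord3P i) => [->|[->|->]];
      rewrite ?evalDx ?evalDy ?evalDz ?ex ?ey ?ez ?mulr0 ?mulr1 ?subrr ?z0pow; ring.
  + have [a' ea] : exists a', a = a'.+1 by case: (a) a1 => [//|a'] _; exists a'.
    rewrite evalG ex ey ez !mulr0 mulr1 subrr !z0pow; split; first by ring.
    move=> i; case: (ord3P i) => [->|[->|->]];
      rewrite ?evalDx ?evalDy ?evalDz ?ex ?ey ?ez ?mulr0 ?mulr1 ?subrr ?ea ?z0pow; ring.
Qed.
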